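(* There exists a sequence $S\in\{0,1\}^\omega$ which is i.o. LZ-deep and FS-deep but not (a.e.) LZ-deep.
   Context: $S\upharpoonright n$ is the length-$n$ prefix of $S$. A finite-state transducer (FST) is $T=(Q,q_0,\delta,\nu)$ with finite state set $Q$, start state $q_0$, $\delta:Q\times\{0,1\}\to Q$, $\nu:Q\times\{0,1\}\to\{0,1\}^*$; $T(\lambda)=\lambda$, $T(xb)=T(x)\nu(\hat\delta(x),b)$; $T$ is an ILFST if $x\mapsto(T(x),\hat\delta(x))$ is injective. FSTs are described by the following fixed binary representation. For $n\ge1$, $\mathrm{bin}(n)$ is the binary representation of $n$ and $\mathrm{string}(n)$ is $\mathrm{bin}(n)$ without its leading 1. For $x=x_1\cdots x_l$, $x^\dagger=x_10x_20\cdots x_{l-1}0x_l1$, $x^\diamond=\overline{(1x)^\dagger}$ (bitwise complement), $d(x)=x_1x_1\cdots x_lx_l$. For an FST with states $q_1,\dots,q_m$, write for $t=2i-1+b$: $(\delta(q_i,b),\nu(q_i,b))=(q_{1+(n_t\bmod m)},\mathrm{string}(n'_t))$; the table is encoded as $\pi=\mathrm{bin}(n_1)^\ddagger\mathrm{string}(n'_1)^\diamond\cdots\mathrm{bin}(n_{2m})^\ddagger\mathrm{string}(n'_{2m})^\diamond$, where $\mathrm{bin}(n_t)^\ddagger$ is empty for a self-loop and $\mathrm{bin}(n_t)^\dagger$ otherwise; $d(\mathrm{bin}(i))01\pi$ describes that FST with start state $q_i$. $|T|$ is the shortest description length, $\mathrm{FST}^{\le k}=\{T:|T|\le k\}$,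 and $D^k(x)=\min\{|y|:T\in\mathrm{FST}^{\le k},T(y)=x\}$. $S$ is FS-deep if there is $\alpha>0$ such that for every $k$ there is $k'$ with $D^k(S\upharpoonright n)-D^{k'}(S\upharpoonright n)\ge\alpha n$ for infinitely many $n$. LZ denotes the Lempel–Ziv 78 compressor: it parses $x=x_1\cdots x_n$ into phrases, each distinct from all earlier ones (except possibly the last), with $x_i=x_{l(i)}b_i$, $l(i)<i$, $b_i\in\{0,1\}$, $x_0=\lambda$; it outputs $c_{l(1)}b_1\cdots c_{l(n)}b_n$ with $c_j$ a prefix-free encoding of index $j$. $S$ is (a.e.) LZ-deep if there is $\alpha>0$ such that for every ILFST $C$, $|C(S\upharpoonright n)|-|\mathrm{LZ}(S\upharpoonright n)|\ge\alpha n$ for all but finitely many $n$; $S$ is i.o. LZ-deep if there is $\alpha>0$ such that for every ILFST $C$ this inequality holds for infinitely many $n$. *)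

(* Defs.v *)
From mathcomp Require Import all_boot.
From Stdlib Require Import Reals.

Set Implicit Arguments.
Unset Strict Implicit.
Unset Printing Implicit Defensive.

Definition binseq := nat -> bool.
Definition prefix (S : binseq) (n : nat) : seq bool := mkseq S n.

Fixpoint bits_aux (fuel n : nat) : seq bool :=
  match fuel with
  | 0 => [::]
  | f.+1 => if n == 0 then [::] else odd n :: bits_aux f n./2
  end.
Definition bin (n : nat) : seq bool := rev (bits_aux n n).
Definition bstring (n : nat) : seq bool := behead (bin n).

Fixpoint dagger (x : seq bool) : seq bool :=
  match x with
  | [::] => [::]
  | [:: a] => [:: a; true]
  | a :: s => a :: false :: dagger s
  end.
Definition diamond (x : seq bool) : seq bool := map negb (dagger (true :: x)).
Definition dbl (x : seq bool) : seq bool := flatten [seq [:: b; b] | b <- x].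

Record fst := FST {
  fst_state : finType;
  fst_start : fst_state;
  fst_delta : fst_state -> bool -> fst_state;
  fst_nu : fst_state -> bool -> seq bool }.

Fixpoint fst_run (T : fst) (q : fst_state T) (x : seq bool) : seq bool :=
  match x with
  | [::] => [::]
  | b :: x' => @fst_nu T q b ++ @fst_run T (@fst_delta T q b) x'
  end.
Definition fst_out (T : fst) (x : seq bool) : seq bool := @fst_run T (fst_start T) x.
Definition fst_dhat (T : fst) (x : seq bool) : fst_state T :=
  foldl (@fst_delta T) (fst_start T) x.
Definition ILFST (T : fst) : Prop :=
  injective (fun x : seq bool => (fst_out T x, fst_dhat T x)).

(** ---------- FSTs given by the fixed binary description ----------
   Data: m states q_1..q_m, start index i, lists ns = [n_1..n_{2m}],
   ns' = [n'_1..n'_{2m}]; transition t = 2j-1+b (0-based position 2(j-1)+b)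
   goes from q_j to q_{1 + (n_t mod m)} with output string(n'_t). *)
Definition tpos (q : nat) (b : bool) : nat := (q.-1).*2 + b.
Definition dnext (m : nat) (ns : seq nat) (q : nat) (b : bool) : nat :=
  (nth 0 ns (tpos q b) %% m).+1.
Definition dnu (ns' : seq nat) (q : nat) (b : bool) : seq bool :=
  bstring (nth 0 ns' (tpos q b)).
Fixpoint drun (m : nat) (ns ns' : seq nat) (q : nat) (y : seq bool) : seq bool :=
  match y with
  | [::] => [::]
  | b :: y' => dnu ns' q b ++ drun m ns ns' (dnext m ns q b) y'
  end.

Definition valid_data (m i : nat) (ns ns' : seq nat) : Prop :=
  [/\ 0 < m, 0 < i <= m, size ns = m.*2, size ns' = m.*2
    & all (fun n => 0 < n) ns && all (fun n => 0 < n) ns'].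

(** pi = bin(n_1)^ddagger string(n'_1)^diamond ... ; ddagger empty on self-loops *)
Definition desc_pi (m : nat) (ns ns' : seq nat) : seq bool :=
  flatten [seq (if nth 0 ns p %% m == p./2 then [::] else dagger (bin (nth 0 ns p)))
               ++ diamond (bstring (nth 0 ns' p)) | p <- iota 0 m.*2].
Definition desc (m i : nat) (ns ns' : seq nat) : seq bool :=
  dbl (bin i) ++ [:: false; true] ++ desc_pi m ns ns'.

Definition Dwitness (k : nat) (x y : seq bool) : Prop :=
  exists m i ns ns', valid_data m i ns ns' /\ size (desc m i ns ns') <= k
                     /\ drun m ns ns' i y = x.

(** D^k(x) = o, with None standing for +infinity (min of the empty set). *)
Definition Dk_is (k : nat) (x : seq bool) (o : option nat) : Prop :=
  match o with
  | None => ~ exists y, Dwitness k x y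
  | Some d => (exists y, Dwitness k x y /\ size y = d)
              /\ forall y, Dwitness k x y -> d <= size y
  end.

(** a - b >= r in extended naturals (infinity - finite = infinity) *)
Definition gap_ge (a b : option nat) (r : R) : Prop :=
  match a, b with
  | Some a, Some b => (INR a - INR b >= r)%R
  | None, Some _ => True
  | _, None => False
  end.

Definition FS_deep (S : binseq) : Prop :=
  exists alpha : R, (0 < alpha)%R /\
    forall k, exists k', forall N, exists n, N <= n /\
      exists a b, Dk_is k (prefix S n) a /\ Dk_is k' (prefix S n) b /\
                  gap_ge a b (alpha * INR n)%R.

(** Greedy LZ78 parsing: next phrase = shortest prefix of the rest not yet a
    phrase; if none, the (last) phrase is the whole rest. *)
Fixpoint lz_aux (fuel : nat) (dict : seq (seq bool)) (x : seq bool)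
  : seq (seq bool) :=
  match fuel with
  | 0 => [::]
  | f.+1 =>
    if x is [::] then [::] else
    let len := minn (find (fun k => take k.+1 x \notin dict) (iota 0 (size x))).+1
                    (size x) in
    take len x :: lz_aux f (rcons dict (take len x)) (drop len x)
  end.
Definition lz_parse (x : seq bool) : seq (seq bool) := lz_aux (size x) [::] x.

(** prefix-free code c_j of an index j >= 0 (Elias-delta style) *)
Definition lz_code (j : nat) : seq bool :=
  dagger (bin (size (bin j.+1))) ++ bstring j.+1.

(** l(i): index of the phrase x_i minus its last bit among x_0 = lambda, x_1.. *)
Definition lz_ptr (prev : seq (seq bool)) (p : seq bool) : nat :=
  if size p <= 1 then 0 else (index (take (size p).-1 p) prev).+1.

Definition LZ (x : seq bool) : seq bool :=
  let ps := lz_parse x in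
  flatten [seq lz_code (lz_ptr (take i ps) (nth [::] ps i))
                 ++ [:: last false (nth [::] ps i)] | i <- iota 0 (size ps)].

Definition LZ_deep (S : binseq) : Prop :=
  exists alpha : R, (0 < alpha)%R /\
    forall C : fst, ILFST C -> exists N, forall n, N <= n ->
      (INR (size (fst_out C (prefix S n))) - INR (size (LZ (prefix S n)))
         >= alpha * INR n)%R.

Definition io_LZ_deep (S : binseq) : Prop :=
  exists alpha : R, (0 < alpha)%R /\
    forall C : fst, ILFST C -> forall N, exists n, N <= n /\
      (INR (size (fst_out C (prefix S n))) - INR (size (LZ (prefix S n)))
         >= alpha * INR n)%R.

(* Main.v *)
Require Import Defs.
From mathcomp Require Import all_boot.
From Stdlib Require Import Reals Lra.
From mathcomp Require Import ssreflect ssrfun ssrbool eqtype ssrnat seq fintype tuple finfun bigop zify.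
Set Implicit Arguments.
Unset Strict Implicit.
Unset Printing Implicit Defensive.
Lemma bits_aux0 f : bits_aux f 0 = [::].
Proof. by case: f. Qed.

Lemma size_bits_aux f n : size (bits_aux f n) <= f.
Proof.
elim: f n => [|f IH] n //=; case: (n == 0) => //=; exact: IH.
Qed.

Lemma size_bin n : size (bin n) <= n.
Proof. by rewrite /bin size_rev size_bits_aux. Qed.

Lemma exp_size_bits f n : 0 < n -> 2 ^ size (bits_aux f n) <= n.*2.
Proof.
elim: f n => [|f IH] n npos /=; first by lia.
have -> : (n == 0) = false by lia.
have -> : size (odd n :: bits_aux f n./2) = (size (bits_aux f n./2)).+1 by [].
rewrite expnS.
case: (posnP n./2) => [h|h].
  by rewrite h bits_aux0 /=; lia.
have := IH _ h.
have := odd_double_half n. lia.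
Qed.

Lemma size_bin_le n s : n < 2 ^ s -> size (bin n) <= s.
Proof.
rewrite /bin size_rev.
case: (posnP n) => [->|npos]; first by rewrite bits_aux0.
move=> hs.
have h := exp_size_bits n npos.
have : 2 ^ size (bits_aux n n) < 2 ^ s.+1 by rewrite expnS; lia.
by rewrite ltn_exp2l.
Qed.

Fixpoint vr (u : seq bool) : nat :=
  if u is b :: u' then b + (vr u').*2 else 1.

Lemma vr_ge u : size u < vr u.
Proof. elim: u => [|b u IH] //=; lia. Qed.

Lemma bits_vr u f : size u < f -> bits_aux f (vr u) = rcons u true.
Proof.
elim: u f => [|b u IH] [|f] hf //=.
  by rewrite bits_aux0.
have -> : (b + (vr u).*2 == 0) = false by have := vr_ge u; lia.
rewrite /= oddD odd_double addbF half_bit_double.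
rewrite IH //; move: hf; by case: b.
Qed.

Definition val1 (w : seq bool) : nat := vr (rev w).

Lemma bin_val1 w : bin (val1 w) = true :: w.
Proof.
rewrite /bin /val1 bits_vr; last exact: vr_ge.
by rewrite rev_rcons revK.
Qed.

Lemma bstring_val1 w : bstring (val1 w) = w.
Proof. by rewrite /bstring bin_val1. Qed.

Lemma val1_pos w : 0 < val1 w.
Proof. rewrite /val1; have := vr_ge (rev w); lia. Qed.

Lemma size_dagger x : size (dagger x) = (size x).*2.
Proof.
elim: x => [|a s IH] //; case: s IH => [|b s] IH //.
have -> : dagger [:: a, b & s] = [:: a, false & dagger (b :: s)] by [].
by rewrite /= IH /=; lia.
Qed.

Lemma size_diamond x : size (diamond x) = (size x).+1.*2.
Proof. by rewrite /diamond size_map size_dagger. Qed.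
Lemma sum_ge_count (A : Type) (f : A -> nat) T s :
  T * count (fun x => T <= f x) s <= sumn (map f s).
Proof.
elim: s => [|x s IH] /=; first by rewrite muln0.
case: (leqP T (f x)) => h /=; lia.
Qed.

Lemma count_bound (A : eqType) (U : finType) (P : pred A) (code : A -> U) s :
  uniq s -> {in s &, forall x y, P x -> P y -> code x = code y -> x = y} ->
  count P s <= #|U|.
Proof.
move=> us inj.
rewrite -size_filter.
have ub : uniq [seq x <- s | P x] by exact: filter_uniq.
have ub2 : uniq (map code [seq x <- s | P x]).
  rewrite map_inj_in_uniq // => x y.
  rewrite !mem_filter => /andP[px xs] /andP[py ys]; exact: inj.
move/card_uniqP: ub2; rewrite size_map => <-.
exact: max_card.
Qed.

Lemma sum_lb (A : eqType) (U : finType) (f : A -> nat) T (code : A -> U) s :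
  uniq s ->
  {in s &, forall x y, f x < T -> f y < T -> code x = code y -> x = y} ->
  T * (size s - #|U|) <= sumn (map f s).
Proof.
move=> us inj.
have h1 := sum_ge_count f T s.
have h2 := count_predC (fun x => T <= f x) s.
have h3 : count (predC (fun x => T <= f x)) s <= #|U|.
  apply: (count_bound (code := code)) => // x y xs ys /= px py.
  apply: inj => //; lia.
have : size s - #|U| <= count (fun x => T <= f x) s by lia.
move=> h4. apply: leq_trans h1. exact: leq_mul.
Qed.

Definition pad T (s : seq bool) : T.-tuple bool := [tuple nth false s i | i < T].

Lemma pad_inj T s1 s2 : size s1 = size s2 -> size s1 <= T -> pad T s1 = pad T s2 -> s1 = s2.
Proof.
move=> e le h; apply/(@eq_from_nth _ false) => // i ilt.
have iT : i < T by lia.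
have := congr1 (fun t => tnth t (Ordinal iT)) h.
by rewrite /pad !tnth_mktuple.
Qed.

Section FSTgen.
Variable C : fst.
Local Notation Q := (fst_state C).
Local Notation dl := (@fst_delta C).

Lemma fst_run_cat (q : Q) x y :
  fst_run q (x ++ y) = fst_run q x ++ fst_run (foldl dl q x) y.
Proof. by elim: x q => [|b x IH] q //=; rewrite IH catA. Qed.

Definition reachable (s : Q) := exists z, fst_dhat C z = s.

Lemma reach_step s u : reachable s -> reachable (foldl dl s u).
Proof. by case=> z <-; exists (z ++ u); rewrite /fst_dhat foldl_cat. Qed.

Lemma inj_from : ILFST C -> forall s, reachable s -> forall u v,
  fst_run s u = fst_run s v -> foldl dl s u = foldl dl s v -> u = v.
Proof.
move=> H s [z <-] u v e1 e2.
have : z ++ u = z ++ v.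
  apply: H => /=. rewrite /fst_out /fst_dhat !fst_run_cat !foldl_cat.
  by rewrite -/(fst_dhat C z) e1 e2.
by move/eqP; rewrite eqseq_cat // => /andP[_ /eqP].
Qed.

Fixpoint tr (q : Q) (bs : seq (seq bool)) : seq (seq bool * Q) :=
  if bs is b :: bs' then (b, q) :: tr (foldl dl q b) bs' else [::].

Lemma tr_fst q bs : map (fun p => p.1) (tr q bs) = bs.
Proof. by elim: bs q => [|b bs IH] q //=; rewrite IH. Qed.

Lemma tr_size q bs :
  size (fst_run q (flatten bs)) = sumn [seq size (fst_run p.2 p.1) | p <- tr q bs].
Proof.
elim: bs q => [|b bs IH] q //=. by rewrite fst_run_cat size_cat IH.
Qed.

Lemma tr_reach q bs : reachable q -> forall p, p \in tr q bs -> reachable p.2.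
Proof.
elim: bs q => [|b bs IH] q rq p //=.
rewrite inE => /orP[/eqP -> //|]. apply: IH. exact: reach_step.
Qed.

Lemma ilfst_copy (H : ILFST C) q (bs : seq (seq bool)) T :
  reachable q -> uniq bs ->
  T * (size bs - #|{: Q * ('I_T.+1 * T.-tuple bool) * Q}|) <= size (fst_run q (flatten bs)).
Proof.
move=> rq ub.
rewrite tr_size.
have -> : size bs = size (tr q bs) by rewrite -{1}(tr_fst q bs) size_map.
apply: (sum_lb (code := fun p : seq bool * Q =>
   (p.2, (inord (size (fst_run p.2 p.1)), pad T (fst_run p.2 p.1)), foldl dl p.2 p.1))).
  by apply: (@map_uniq _ _ (fun p => p.1)); rewrite tr_fst.
move=> [b1 s1] [b2 s2] i1 i2 /= l1 l2 E.
have e1 := congr1 (fun c => c.1.1) E; simpl in e1; subst s2.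
have e2 := congr1 (fun c => nat_of_ord c.1.2.1) E; simpl in e2.
have e3 := congr1 (fun c => c.1.2.2) E; simpl in e3.
have e4 := congr1 (fun c => c.2) E; simpl in e4.
have es : size (fst_run s1 b1) = size (fst_run s1 b2).
  move: e2; rewrite !inordK //; lia.
have eo : fst_run s1 b1 = fst_run s1 b2.
  apply: (pad_inj es _ e3); lia.
have rs : reachable s1 by apply: (tr_reach rq i1).
by rewrite (inj_from H rs eo e4).
Qed.
End FSTgen.
Lemma cat_split (T : Type) (o R A B : seq T) :
  o ++ R = A ++ B -> size o <= size A ->
  A = o ++ drop (size o) A /\ R = drop (size o) A ++ B.
Proof.
move=> e le.
have e1 := congr1 (take (size o)) e.
rewrite take_size_cat // takel_cat // in e1.
have e2 := congr1 (drop (size o)) e.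
rewrite drop_size_cat // drop_cat in e2.
split; first by rewrite {1}e1 cat_take_drop.
move: e2; case: ltnP => h.
  by [].
have -> : size o = size A by lia.
by rewrite subnn drop0 drop_size.
Qed.

Section Drun.
Variables (m k : nat) (ns ns' : seq nat).
Hypothesis Hm : 0 < m.
Hypothesis Hout : forall q b, 0 < q <= m -> size (dnu ns' q b) < k.

Definition dfin q y := foldl (dnext m ns) q y.

Lemma dnext_in q b : 0 < dnext m ns q b <= m.
Proof. rewrite /dnext; have := ltn_pmod (nth 0 ns (tpos q b)) Hm; lia. Qed.

Lemma dfin_in q y : 0 < q <= m -> 0 < dfin q y <= m.
Proof.
elim: y q => [|b y IH] q hq //=. apply: IH. exact: dnext_in.
Qed.

Lemma drun_cat q y1 y2 : drun m ns ns' q (y1 ++ y2) = drun m ns ns' q y1 ++ drun m ns ns' (dfin q y1) y2.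
Proof. by elim: y1 q => [|b y IH] q //=; rewrite IH catA. Qed.

Lemma drun_split q y A B : 0 < q <= m -> drun m ns ns' q y = A ++ B ->
  exists y1 y2 A2, [/\ y = y1 ++ y2, size A2 < k, drun m ns ns' q y1 ++ A2 = A
                     & drun m ns ns' (dfin q y1) y2 = A2 ++ B].
Proof.
elim: y q A => [|b y IH] q A hq /=.
  move=> e. have hk := Hout false hq.
  have [-> ->] : A = [::] /\ B = [::] by case: A e => //; case: B.
  exists [::], [::], [::]; split => //=; lia.
move=> e.
case: (leqP (size (dnu ns' q b)) (size A)) => h.
  have [eA eR] := cat_split e h.
  have [y1 [y2 [A2 [e1 e2 e3 e4]]]] := IH _ _ (dnext_in q b) eR.
  exists (b :: y1), y2, A2; split => //=; first by rewrite e1.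
  by rewrite -catA e3 -eA.
exists [::], (b :: y), A; split => //=; have := Hout b hq; lia.
Qed.

Definition Gf (c : nat * seq bool * nat * seq bool) : seq bool :=
  drop c.1.2 (drun m ns ns' c.1.1.1 c.1.1.2 ++ c.2).
Definition cvalid (c : nat * seq bool * nat * seq bool) : bool :=
  [&& 0 < c.1.1.1 <= m, c.1.2 < k & size c.2 < k].

Lemma drun_blocks bs q y A2 R : 0 < q <= m -> size A2 < k ->
  drun m ns ns' q y = A2 ++ flatten bs ++ R ->
  exists cs y2 q' A2', [/\ map Gf cs = bs, all cvalid cs,
     size y = sumn (map (fun c => size c.1.1.2) cs) + size y2,
     (0 < q' <= m) /\ size A2' < k & drun m ns ns' q' y2 = A2' ++ R].
Proof.
elim: bs q y A2 => [|b bs IH] q y A2 hq hA /= e.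
  by exists [::], y, q, A2; split.
have e' : drun m ns ns' q y = (A2 ++ b) ++ (flatten bs ++ R) by rewrite e !catA.
have [z [y2 [A2' [e1 e2 e3 e4]]]] := drun_split hq e'.
have [cs [y3 [q' [A3 [f1 f2 f3 f4 f5]]]]] := IH _ _ _ (dfin_in z hq) e2 e4.
exists ((q, z, size A2, A2') :: cs), y3, q', A3; split => //=.
- by rewrite f1 /Gf /= e3 drop_size_cat.
- by rewrite f2 andbT /cvalid /= hq hA e2.
- by rewrite e1 size_cat f3; lia.
Qed.

Lemma drun_copy bs T q y A2 R : 0 < q <= m -> size A2 < k -> uniq bs ->
  drun m ns ns' q y = A2 ++ flatten bs ++ R ->
  exists y2 q' A2', [/\ T * (size bs - #|{: 'I_m.+1 * ('I_T.+1 * T.-tuple bool) * 'I_k.+1 * ('I_k.+1 * k.-tuple bool)}|) + size y2 <= size y,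
     (0 < q' <= m) /\ size A2' < k & drun m ns ns' q' y2 = A2' ++ R].
Proof.
move=> hq hA ub e.
have [cs [y2 [q' [A2' [f1 f2 f3 f4 f5]]]]] := drun_blocks hq hA e.
exists y2, q', A2'; split => //.
rewrite f3 leq_add2r.
have -> : size bs = size cs by rewrite -f1 size_map.
apply: (sum_lb (code := fun c : nat * seq bool * nat * seq bool =>
   (inord c.1.1.1, (inord (size c.1.1.2), pad T c.1.1.2), inord c.1.2, (inord (size c.2), pad k c.2)))).
  by apply: (@map_uniq _ _ Gf); rewrite f1.
move=> [[[q1 z1] o1] e1] [[[q2 z2] o2] e2] i1 i2 /= l1 l2 E.
have v1 := allP f2 _ i1; have v2 := allP f2 _ i2.
move: v1 v2; rewrite /cvalid /= => /and3P[hq1 ho1 he1] /and3P[hq2 ho2 he2].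
have E1 := congr1 (fun c => nat_of_ord c.1.1.1) E; simpl in E1.
have E2 := congr1 (fun c => nat_of_ord c.1.1.2.1) E; simpl in E2.
have E3 := congr1 (fun c => c.1.1.2.2) E; simpl in E3.
have E4 := congr1 (fun c => nat_of_ord c.1.2) E; simpl in E4.
have E5 := congr1 (fun c => nat_of_ord c.2.1) E; simpl in E5.
have E6 := congr1 (fun c => c.2.2) E; simpl in E6.
move: E1 E2 E4 E5; rewrite !inordK; try lia.
move=> E1 E2 E4 E5.
have ez : z1 = z2 by apply: (pad_inj E2 _ E3); lia.
have ee : e1 = e2 by apply: (pad_inj E5 _ E6); lia.
by rewrite E1 ez E4 ee.
Qed.

Lemma drun_copies r bs T q y A2 R : 0 < q <= m -> size A2 < k -> uniq bs ->
  drun m ns ns' q y = A2 ++ flatten (nseq r (flatten bs)) ++ R ->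
  r * (T * (size bs - #|{: 'I_m.+1 * ('I_T.+1 * T.-tuple bool) * 'I_k.+1 * ('I_k.+1 * k.-tuple bool)}|)) <= size y.
Proof.
elim: r q y A2 => [|r IH] q y A2 hq hA ub e; first by rewrite mul0n.
rewrite /= -catA in e.
have [y2 [q' [A2' [h1 [h2 h3] h4]]]] := drun_copy T hq hA ub e.
have := IH _ _ _ h2 h3 ub h4. rewrite mulSn. lia.
Qed.
End Drun.
Lemma ilfst_copies (C : fst) (H : ILFST C) r bs T (q : fst_state C) :
  reachable q -> uniq bs ->
  r * (T * (size bs - #|{: fst_state C * ('I_T.+1 * T.-tuple bool) * fst_state C}|))
    <= size (fst_run q (flatten (nseq r (flatten bs)))).
Proof.
elim: r q => [|r IH] q rq ub; first by rewrite mul0n.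
rewrite /= fst_run_cat size_cat mulSn.
apply: leq_add; first exact: ilfst_copy.
apply: IH => //; exact: reach_step.
Qed.

Lemma lz_props f dict x : size x <= f -> uniq dict ->
  let rs := lz_aux f dict x in
  [/\ flatten rs = x, all (fun p => p != [::]) rs & uniq (dict ++ take (size rs).-1 rs)].
Proof.
elim: f dict x => [|f IH] dict x hx ud /=.
  by case: x hx => //=; rewrite cats0.
case: x hx => [|b x'] hx /=; first by rewrite cats0.
set x := b :: x'.
set P := fun k => take k.+1 x \notin dict.
set i := find P (iota 0 (size x)).
set len := minn i.+1 (size x).
have lenpos : 0 < len by rewrite /len /x /=; lia.
have lenle : len <= size x by rewrite /len; lia.
have hd : size (drop len x) <= f by rewrite size_drop /x /=; rewrite /x /= in lenle hx; lia.
have found : size (lz_aux f (rcons dict (take len x)) (drop len x)) != 0 ->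
   (i < size x) /\ take len x \notin dict.
  move=> ne.
  case: (ltnP i (size x)) => hi.
    split => //.
    have hP : has P (iota 0 (size x)) by rewrite has_find size_iota.
    have := nth_find 0 hP. rewrite -/i nth_iota // add0n /P.
    by have -> : len = i.+1 by rewrite /len; lia.
  move: ne. have -> : len = size x by rewrite /len; lia.
  rewrite drop_size. by case: (f) {IH hd}.
case: (eqVneq (size (lz_aux f (rcons dict (take len x)) (drop len x))) 0) => hz.
  move/eqP: (hz); rewrite size_eq0 => /eqP ->.
  split => //=.
  - rewrite cats0.
    have : size (lz_aux f (rcons dict (take len x)) (drop len x)) = 0 := hz.
    case: (ltnP i (size x)) => hi.
      have ud' : uniq (rcons dict (take len x)).
        rewrite rcons_uniq ud andbT.
        have hP : has P (iota 0 (size x)) by rewrite has_find size_iota.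
        have := nth_find 0 hP. rewrite -/i nth_iota // add0n /P.
        by have -> : len = i.+1 by rewrite /len; lia.
      have [f1 _ _] := IH _ _ hd ud'.
      move=> e0; move: f1; rewrite (size0nil e0) /= => e1.
      by rewrite -{2}(cat_take_drop len x) -e1 cats0.
    have -> : len = size x by rewrite /len; lia.
    by rewrite take_size.
  - rewrite andbT -size_eq0 size_takel //; lia.
  - by rewrite cats0.
have [hi nd] := found hz.
have ud' : uniq (rcons dict (take len x)) by rewrite rcons_uniq ud nd.
have [f1 f2 f3] := IH _ _ hd ud'.
split => //=.
- by rewrite f1 cat_take_drop.
- by rewrite f2 andbT -size_eq0 size_takel //; lia.
- move: f3 hz. set L := lz_aux f _ _. case: L => [|a L] // f3 _.
  by move: f3; rewrite -cats1 -catA /=.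
Qed.

Lemma lz_parse_props x : let ps := lz_parse x in
  [/\ flatten ps = x, all (fun p => p != [::]) ps & uniq (take (size ps).-1 ps)].
Proof. by have := @lz_props (size x) [::] x (leqnn _) isT. Qed.
Lemma sumn_map_bound (A : eqType) (g : A -> nat) s B :
  (forall i, i \in s -> g i <= B) -> sumn (map g s) <= size s * B.
Proof.
elim: s => [|a s IH] h //=.
rewrite mulSn; apply: leq_add; first by apply: h; rewrite inE eqxx.
by apply: IH => i hi; apply: h; rewrite inE hi orbT.
Qed.

Lemma LZ_size x s : (size (lz_parse x)).+1 < 2 ^ s ->
  size (LZ x) <= size (lz_parse x) * (3 * s + 1).
Proof.
move=> hs.
rewrite /LZ size_flatten /shape -map_comp.
apply: leq_trans; first apply: (sumn_map_bound (B := 3 * s + 1)).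
  2: by rewrite size_iota.
move=> i; rewrite mem_iota add0n => /andP[_ hi] /=.
rewrite size_cat /= /lz_code size_cat size_dagger /bstring size_behead.
set ps := lz_parse x.
set j := lz_ptr _ _.
have hj : j <= i.+1.
  rewrite /j /lz_ptr; case: ifP => _ //.
  have := index_size (take (size (nth [::] ps i)).-1 (nth [::] ps i)) (take i ps).
  rewrite size_take; case: ifP; lia.
have h1 : size (bin j.+1) <= s.
  apply: size_bin_le. lia.
have h2 := size_bin (size (bin j.+1)).
lia.
Qed.

Lemma lz_split (ps : seq (seq bool)) P Q : all (fun p => p != [::]) ps ->
  flatten ps = P ++ Q -> exists j d, j <= size P /\ flatten (drop j.+1 ps) = drop d Q.
Proof.
elim: ps P => [|u ps IH] P /=.
  move=> _ e. exists 0, (size Q). split => //.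
  by case: P e => //; case: Q.
move=> /andP[un an] e.
case: (leqP (size u) (size P)) => h.
  have [eP eR] := cat_split e h.
  have [j [d [h1 h2]]] := IH _ an eR.
  exists j.+1, d; split => //.
  have hu : size u != 0 by rewrite size_eq0.
  rewrite eP size_cat; lia.
exists 0, (size u - size P); split => //; rewrite drop0.
have := congr1 (drop (size u)) e.
rewrite drop_size_cat // drop_cat; case: ltnP => //; lia.
Qed.

Lemma window_of (ss : seq (seq bool)) u : u \in ss ->
  exists a, u = take (size u) (drop a (flatten ss)).
Proof.
elim: ss => [|v ss IH] //=; rewrite inE => /orP[/eqP ->|hu].
  by exists 0; rewrite drop0 take_size_cat.
have [a ea] := IH hu.
exists (size v + a).
by rewrite addnC -drop_drop drop_size_cat.
Qed.

Definition Fw (W : seq bool) (o n : nat) : seq bool :=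
  mkseq (fun i => nth false W ((o + i) %% size W)) n.

Lemma nth_rep W r t : 0 < size W -> t < r * size W ->
  nth false (flatten (nseq r W)) t = nth false W (t %% size W).
Proof.
move=> hW; elim: r t => [|r IH] t ht; first by rewrite mul0n in ht.
rewrite /= nth_cat; case: ltnP => h.
  by rewrite modn_small.
rewrite IH; last by rewrite mulSn in ht; lia.
congr nth.
have -> : t = (t - size W) + size W by lia.
by rewrite addnK modnDr.
Qed.

Lemma window_rep W r a n : 0 < size W ->
  size (take n (drop a (flatten (nseq r W)))) = n ->
  take n (drop a (flatten (nseq r W))) = Fw W (a %% size W) n.
Proof.
move=> hW hs.
have hQ : size (flatten (nseq r W)) = r * size W.
  by rewrite size_flatten /shape map_nseq sumn_nseq mulnC.
apply: (@eq_from_nth _ false); first by rewrite hs /Fw size_mkseq.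
move=> i; rewrite hs => hi.
rewrite nth_take // nth_drop /Fw nth_mkseq //.
have : a + i < r * size W.
  move: hs; rewrite size_take size_drop hQ. case: ltnP; lia.
move=> hai; rewrite nth_rep //.
by rewrite modnDml.
Qed.
Lemma phrases_bound P W r h : 0 < size W ->
  h.+1 * (size (lz_parse (P ++ flatten (nseq r W))) - size P - 2 - size W * h.+1)
    <= r * size W.
Proof.
move=> hW.
set Q := flatten (nseq r W).
have hQ : size Q = r * size W.
  by rewrite /Q size_flatten /shape map_nseq sumn_nseq mulnC.
have [fl ne un] := lz_parse_props (P ++ Q).
set ps := lz_parse (P ++ Q) in fl ne un *.
have [j [d [hj hd]]] := lz_split ne fl.
set ps2 := drop j.+1 ps in hd.
set s := take (size ps2).-1 ps2.
have hs1 : size ps <= j.+1 + size ps2 by rewrite /ps2 size_drop; lia.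
have hs2 : size ps2 <= (size s).+1 by rewrite /s size_take; case: ifP; lia.
have us : uniq s.
  case: (posnP (size ps2)) => h0.
    by rewrite /s h0 take0.
  rewrite /s /ps2 take_drop.
  have -> : (size (drop j.+1 ps)).-1 + j.+1 = (size ps).-1.
    by move: h0; rewrite /ps2 size_drop; lia.
  exact: drop_uniq.
have win : forall u, u \in s -> exists o, o < size W /\ u = Fw W o (size u).
  move=> u /mem_take hu.
  have [a ea] := window_of hu.
  rewrite hd drop_drop in ea.
  exists ((a + d) %% size W); split; first exact: ltn_pmod.
  rewrite {1}ea window_rep //.
  by rewrite -ea.
have hshort : count (fun u => size u < h.+1) s <= size W * h.+1.
  rewrite -size_filter.
  rewrite -(size_iota 0 (size W)) -(size_iota 0 h.+1) -(size_allpairs (Fw W)).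
  apply: uniq_leq_size; first exact: filter_uniq.
  move=> u; rewrite mem_filter => /andP[hu us'].
  have [o [ho eo]] := win u us'.
  rewrite eo; apply: allpairs_f; rewrite mem_iota add0n leq0n /=; [exact: ho | by move: hu; rewrite size_iota].
have hlong : h.+1 * count (fun u => h.+1 <= size u) s <= r * size W.
  apply: leq_trans (sum_ge_count size h.+1 s) _.
  have -> : sumn (map size s) = size (flatten s) by rewrite size_flatten.
  rewrite -hQ.
  have : size (flatten ps2) <= size Q by rewrite hd size_drop; lia.
  apply: leq_trans.
  have e : flatten ps2 = flatten s ++ flatten (drop (size ps2).-1 ps2).
    by rewrite -flatten_cat cat_take_drop.
  rewrite e size_cat; lia.
have hc := count_predC (fun u => h.+1 <= size u) s.
have hc2 : count (predC (fun u => h.+1 <= size u)) s = count (fun u => size u < h.+1) s.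
  by apply: eq_count => u /=; rewrite -ltnNge.
apply: leq_trans hlong.
rewrite leq_pmul2l //.
lia.
Qed.
Section Zero.
Variable K : nat.

Definition zdelta (j : 'I_K.+1) (b : bool) : 'I_K.+1 :=
  if b then ord0 else if j < K then inord j.+1 else ord0.
Definition znu (j : 'I_K.+1) (b : bool) : seq bool :=
  if b then true :: rcons (nseq j false) true else if j < K then [::] else [:: false].
Definition zfst : fst := @FST 'I_K.+1 ord0 zdelta znu.

Fixpoint zdec (mode : option nat) (r : seq bool) : seq bool :=
  match r with
  | [::] => [::]
  | b :: r' =>
    match mode with
    | None => if b then zdec (Some 0) r' else nseq K.+1 false ++ zdec None r'
    | Some i => if b then nseq i false ++ true :: zdec None r' else zdec (Some i.+1) r'
    end
  end.

Lemma zdec_tok i j r : zdec (Some i) (nseq j false ++ true :: r) = nseq (i + j) false ++ true :: zdec None r.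
Proof.
elim: j i => [|j IH] i /=; first by rewrite addn0.
by rewrite IH addSnnS.
Qed.

Lemma nseq_false_cons j x : nseq j false ++ false :: x = nseq j.+1 false ++ x.
Proof. by elim: j => [|j IH] //=; rewrite IH. Qed.

Lemma zdec_run x (j : 'I_K.+1) :
  zdec None (@fst_run zfst j x) ++ nseq (foldl zdelta j x) false = nseq j false ++ x.
Proof.
elim: x j => [|b x IH] j /=; first by rewrite cats0.
case: b => /=.
  rewrite /znu /= -cats1 -catA /= zdec_tok add0n -catA /=.
  by rewrite (IH ord0).
rewrite /znu /zdelta /=.
case: ifP => hj /=.
  rewrite IH inordK; last by lia.
  by rewrite nseq_false_cons.
have -> : nat_of_ord j = K by have := ltn_ord j; lia.
by rewrite -catA (IH ord0) /= nseq_false_cons.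
Qed.

Lemma zfst_IL : ILFST zfst.
Proof.
move=> x y /= [e1 e2].
have := zdec_run x ord0; have := zdec_run y ord0.
rewrite /fst_out /fst_dhat in e1 e2.
by rewrite /= e1 e2 => -> .
Qed.

Lemma zrun_size x (j : 'I_K.+1) :
  K.+1 * size (@fst_run zfst j x) + foldl zdelta j x
    <= j + count negb x + K.+1 * K.+2 * count id x.
Proof.
elim: x j => [|b x IH] j /=; first by lia.
have hjK : nat_of_ord j <= K by have := ltn_ord j; lia.
case: b => /=.
  rewrite /znu /= size_cat size_rcons size_nseq.
  have := IH ord0; rewrite /=.
  have : K.+1 * (j.+2) <= K.+1 * K.+2 by rewrite leq_mul2l; lia.
  nia.
case: ifP => hj /=.
  have := IH (inord j.+1); rewrite inordK; last by lia.
  lia.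
have := IH ord0; rewrite /=. lia.
Qed.

Lemma zfst_size x : K.+1 * size (fst_out zfst x) <= size x + K.+1 * K.+2 * count id x.
Proof.
have := zrun_size x ord0.
have := count_predC id x.
have -> : count (predC id) x = count negb x by apply: eq_count.
rewrite /fst_out /=. lia.
Qed.
End Zero.
Definition aexp (k : nat) := 4 * k + 10.
Definition ell (k : nat) := 2 ^ aexp k.
Definition blk (l : nat) : seq (seq bool) := [seq val t | t <- enum {: l.-tuple bool}].
Definition Wd (k : nat) : seq bool := flatten (blk (ell k)).
Definition lev (i : nat) := logn 2 i.+1.

Lemma blk_uniq l : uniq (blk l).
Proof. rewrite /blk map_inj_uniq; [exact: enum_uniq | exact: val_inj]. Qed.

Lemma size_blk l : size (blk l) = 2 ^ l.
Proof. by rewrite /blk size_map -cardE card_tuple card_bool. Qed.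

Lemma size_Wd k : size (Wd k) = ell k * 2 ^ ell k.
Proof.
rewrite /Wd size_flatten /shape /blk -map_comp.
have -> : [seq (size \o val) i | i <- enum {: (ell k).-tuple bool}] =
          nseq (size (enum {: (ell k).-tuple bool})) (ell k).
  elim: (enum _) => [|t s IH] //=. by rewrite IH size_tuple.
by rewrite sumn_nseq -cardE card_tuple card_bool mulnC.
Qed.

Lemma ell_ge k : 8 * k + 13 <= ell k /\ 64 * k + 104 <= ell k.
Proof.
rewrite /ell /aexp expnD.
have h1 : 2 ^ 10 = 1024 by [].
have h2 : 4 * k < 2 ^ (4 * k) by apply: ltn_expl.
rewrite h1; lia.
Qed.

Lemma Wd_pos k : 0 < size (Wd k).
Proof. rewrite size_Wd muln_gt0 expn_gt0 /= andbT /ell expn_gt0. done. Qed.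

Definition eexp (p k : nat) := p + ell k + 64.
Definition RR (p k : nat) := 2 ^ eexp p k.
Definition Wpart (p k : nat) : seq bool := flatten (nseq (RR p k * RR p k) (Wd k)).
Definition phase (i p : nat) : seq bool :=
  Wpart p (lev i) ++ nseq (i * (p + size (Wpart p (lev i)))) false.

Fixpoint Pre (i : nat) : seq bool :=
  if i is i'.+1 then Pre i' ++ phase i' (size (Pre i')) else [::].

Arguments Wpart : simpl never.
Arguments phase : simpl never.
Arguments ell : simpl never.
Arguments RR : simpl never.

Definition Sq : binseq := fun j => nth false (Pre j.+1) j.

Lemma size_Wpart p k : size (Wpart p k) = RR p k * RR p k * size (Wd k).
Proof. by rewrite /Wpart size_flatten /shape map_nseq sumn_nseq mulnC. Qed.

Lemma RR_pos p k : 0 < RR p k.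
Proof. by rewrite /RR expn_gt0. Qed.

Lemma Pre_S i : Pre i.+1 = Pre i ++ phase i (size (Pre i)).
Proof. by []. Qed.

Lemma size_Pre i : i <= size (Pre i).
Proof.
elim: i => [|i IH] //.
rewrite Pre_S size_cat /phase size_cat size_Wpart.
have := RR_pos (size (Pre i)) (lev i).
have := Wd_pos (lev i).
set a := RR _ _; set b := size (Wd _).
move=> ha hb. have : 0 < a * a * b by rewrite !muln_gt0 ha hb.
set c := a * a * b. lia.
Qed.

Lemma Pre_mono i j : i <= j -> exists t, Pre j = Pre i ++ t.
Proof.
move=> /subnK <-; elim: (j - i) => [|d [t IH]]; first by exists [::]; rewrite cats0.
by rewrite addSn Pre_S IH -catA; eexists.
Qed.

Lemma nth_Pre i t : t < size (Pre i) -> nth false (Pre t.+1) t = nth false (Pre i) t.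
Proof.
move=> ht.
case: (leqP t.+1 i) => h.
  have [u ->] := Pre_mono h.
  rewrite nth_cat; have := size_Pre t.+1; case: ltnP => //; lia.
have [u ->] := Pre_mono (ltnW h).
by rewrite nth_cat ht.
Qed.

Lemma prefix_Pre n i : n <= size (Pre i) -> Defs.prefix Sq n = take n (Pre i).
Proof.
move=> hn.
apply: (@eq_from_nth _ false); first by rewrite size_mkseq size_takel.
move=> t; rewrite size_mkseq => ht.
rewrite nth_mkseq // nth_take // /Sq (@nth_Pre i) //; lia.
Qed.

Lemma prefix_W i : Defs.prefix Sq (size (Pre i) + size (Wpart (size (Pre i)) (lev i)))
   = Pre i ++ Wpart (size (Pre i)) (lev i).
Proof.
rewrite (@prefix_Pre _ i.+1); last by rewrite Pre_S size_cat /phase size_cat; lia.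
by rewrite Pre_S /phase catA -size_cat take_size_cat.
Qed.

Lemma prefix_Z i : Defs.prefix Sq (size (Pre i.+1)) = Pre i.+1.
Proof. by rewrite (@prefix_Pre _ i.+1) // take_size. Qed.

Lemma lev_inf k N : exists i, N <= i /\ lev i = k.
Proof.
exists (2 ^ k * N.*2.+1).-1; split.
  have : N.*2.+1 <= 2 ^ k * N.*2.+1 by rewrite leq_pmull // expn_gt0.
  lia.
rewrite /lev prednK; last by rewrite muln_gt0 expn_gt0.
rewrite lognM ?expn_gt0 // pfactorK // logn_coprime ?addn0 //.
by rewrite coprime2n /= odd_double.
Qed.
Lemma Dk_exists k x : exists o, Dk_is k x o.
Proof.
case: (Classical_Prop.classic (exists y, Dwitness k x y)) => [[y0 w0]|nw].
  suff : forall n, forall y, size y <= n -> Dwitness k x y ->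
           exists d, (exists y, Dwitness k x y /\ size y = d) /\
                     forall y, Dwitness k x y -> d <= size y.
    by move=> h; have [d hd] := h _ y0 (leqnn _) w0; exists (Some d).
  elim=> [|n IH] y hy wy.
    exists 0; split; first by exists y; split => //; lia.
    by move=> y'; lia.
  case: (Classical_Prop.classic (exists y', Dwitness k x y' /\ size y' < size y)).
    move=> [y' [w' h']]. apply: (IH y') => //; lia.
  move=> nh. exists (size y); split; first by exists y.
  move=> y' w'. case: (leqP (size y) (size y')) => // h.
  by exfalso; apply: nh; exists y'.
by exists None.
Qed.

Definition wns : seq nat := [:: 2; 1; 2; 2].
Definition wns' (w : seq bool) : seq nat := [:: val1 w; 1; 2; 3].

Lemma wvalid w : valid_data 2 1 wns (wns' w).
Proof. by split => //=; rewrite val1_pos. Qed.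

Lemma wdesc w : size (desc 2 1 wns (wns' w)) = 26 + (size w).*2.
Proof.
rewrite /desc /desc_pi /= !size_cat /= !size_diamond bstring_val1 /=.
lia.
Qed.

Definition wenc (P : seq bool) : seq bool := flatten [seq [:: true; b] | b <- P].

Lemma wrun w P r :
  drun 2 wns (wns' w) 1 (wenc P ++ nseq r false) = P ++ flatten (nseq r w).
Proof.
elim: P => [|b P IH] /=.
  elim: r => [|r IH] //=.
  rewrite IH /dnu /= bstring_val1. done.
rewrite -IH /dnu /dnext /=.
by case: b.
Qed.

Lemma size_wenc P : size (wenc P) = (size P).*2.
Proof. elim: P => [|b P IH] //=. rewrite IH. lia. Qed.

Lemma flatten_piece (T : eqType) (ss : seq (seq T)) s : s \in ss -> size s <= size (flatten ss).
Proof.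
elim: ss => [|a ss IH] //=. rewrite size_cat.
rewrite inE => /orP[/eqP ->|h]; first lia.
have := IH h. lia.
Qed.

Lemma sumn_map_lb (A : eqType) (g : A -> nat) s B :
  (forall i, i \in s -> B <= g i) -> size s * B <= sumn (map g s).
Proof.
elim: s => [|a s IH] h //=.
rewrite mulSn; apply: leq_add; first by apply: h; rewrite inE eqxx.
by apply: IH => i hi; apply: h; rewrite inE hi orbT.
Qed.

Lemma witness_bounds k m i ns ns' :
  valid_data m i ns ns' -> size (desc m i ns ns') <= k ->
  [/\ 0 < m, m <= k, 0 < i <= m & forall q b, 0 < q <= m -> size (dnu ns' q b) < k].
Proof.
move=> [hm hi hs hs' _] hk.
have hpi : size (desc_pi m ns ns') <= k.
  by apply: leq_trans hk; rewrite /desc !size_cat; lia.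
have piece : forall p, p < m.*2 ->
  size (diamond (bstring (nth 0 ns' p))) <= size (desc_pi m ns ns').
  move=> p hp; rewrite /desc_pi.
  set f := fun p => _.
  apply: leq_trans (flatten_piece (s := f p) _).
    by rewrite /f size_cat leq_addl.
  by apply: map_f; rewrite mem_iota.
split => //.
- have : m.*2 * 2 <= size (desc_pi m ns ns').
    rewrite /desc_pi size_flatten /shape -map_comp.
    rewrite -{1}(size_iota 0 m.*2).
    apply: sumn_map_lb => p _ /=.
    by rewrite size_cat size_diamond; lia.
  lia.
- move=> q b hq.
  have := piece (tpos q b).
  rewrite /dnu size_diamond.
  have : tpos q b < m.*2 by rewrite /tpos; case: b; lia.
  lia.
Qed.
Definition Bnd (k T : nat) := k.+1 * (T.+1 * 2 ^ T) * k.+1 * (k.+1 * 2 ^ k).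

Lemma Dk_lb k x y P r bs T : Dwitness k x y ->
  x = P ++ flatten (nseq r (flatten bs)) -> uniq bs ->
  r * (T * (size bs - Bnd k T)) <= size y.
Proof.
move=> [m [i [ns [ns' [hv [hk e]]]]]] ex ub.
have [hm hmk hi hout] := witness_bounds hv hk.
rewrite ex in e.
have [y1 [y2 [A2 [e1 e2 e3 e4]]]] := drun_split hm hout hi e.
have e4' : drun m ns ns' (dfin m ns i y1) y2 = A2 ++ flatten (nseq r (flatten bs)) ++ [::].
  by rewrite cats0.
have := drun_copies hm hout T (dfin_in ns hm y1 hi) e2 ub e4'.
rewrite !card_prod !card_ord !card_tuple card_bool.
move=> h.
have hy : size y2 <= size y by rewrite e1 size_cat leq_addl.
apply: leq_trans hy. apply: leq_trans h.
rewrite leq_mul2l; apply/orP; right.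
rewrite leq_mul2l; apply/orP; right.
apply: leq_sub2l.
rewrite /Bnd. by repeat apply: leq_mul => //.
Qed.

Lemma C_lb (C : fst) (H : ILFST C) P r bs T : uniq bs ->
  r * (T * (size bs - #|fst_state C| * (T.+1 * 2 ^ T) * #|fst_state C|))
    <= size (fst_out C (P ++ flatten (nseq r (flatten bs)))).
Proof.
move=> ub.
rewrite /fst_out fst_run_cat size_cat.
have rq : reachable (foldl (@fst_delta C) (fst_start C) P) by exists P.
have := ilfst_copies H r T rq ub.
rewrite !card_prod !card_ord card_tuple card_bool.
move=> h; apply: leq_trans h _. exact: leq_addl.
Qed.

Definition Tk (k : nat) := ell k - (8 * k + 13).

Lemma num_N1 k : 8 * Bnd k (Tk k) <= 2 ^ ell k.
Proof.
have [g1 _] := ell_ge k.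
have hk : k.+1 <= 2 ^ k by apply: ltn_expl.
have hT : (Tk k).+1 <= 2 ^ aexp k by rewrite /Tk -/(ell k) ; lia.
have : Bnd k (Tk k) <= 2 ^ k * (2 ^ aexp k * 2 ^ Tk k) * 2 ^ k * (2 ^ k * 2 ^ k).
  rewrite /Bnd; repeat apply: leq_mul => //.
rewrite -!expnD => h.
have -> : ell k = 3 + (k + (aexp k + Tk k) + k + (k + k)).
  rewrite /Tk /aexp; move: g1; rewrite /ell /aexp; lia.
rewrite expnD (_ : 2 ^ 3 = 8) //. by rewrite leq_mul2l.
Qed.

Lemma num_N3 k : 7 * ell k <= 8 * Tk k.
Proof. have [_ g2] := ell_ge k. rewrite /Tk; lia. Qed.

Lemma num_main k : 3 * (ell k * 2 ^ ell k) <= 4 * (Tk k * (2 ^ ell k - Bnd k (Tk k))).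
Proof.
have n1 := num_N1 k. have n3 := num_N3 k.
set X := 2 ^ ell k in n1 *; set B := Bnd k (Tk k) in n1 *.
set D := X - B.
have hD : 7 * X <= 8 * D by rewrite /D; lia.
have := leq_mul n3 hD.
set l := ell k; set T := Tk k.
move=> h.
rewrite -(leq_pmul2l (isT : 0 < 16)).
apply: leq_trans (_ : 49 * (l * X) <= _).
  lia.
have -> : 16 * (4 * (T * D)) = (8 * T) * (8 * D) by nia.
have -> : 49 * (l * X) = 7 * l * (7 * X) by nia.
exact: h.
Qed.
Lemma RR_big p k : 288 * eexp p k <= RR p k.
Proof.
rewrite /RR.
set e := eexp p k.
have he : 64 <= e by rewrite /e /eexp; lia.
have -> : e = 10 + (e - 10) by lia.
rewrite expnD (_ : 2 ^ 10 = 1024) //.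
have := ltn_expl (e - 10) (isT : 1 < 2).
lia.
Qed.

Lemma real_gap a b n : 8 * b + 2 * n <= 8 * a -> (INR a - INR b >= / 4 * INR n)%R.
Proof.
move=> h.
have := le_INR _ _ (elimT leP h).
rewrite -!plusE -!multE plus_INR (mult_INR 8 b) (mult_INR 2 n) (mult_INR 8 a).
have -> : INR 8 = 8%R by simpl; lra.
have -> : INR 2 = 2%R by simpl; lra.
lra.
Qed.

Lemma Wpart_eq p k : Wpart p k = flatten (nseq (RR p k * RR p k) (flatten (blk (ell k)))).
Proof. by []. Qed.

Lemma io_part : io_LZ_deep Sq.
Proof.
exists (/ 4)%R; split; first lra.
move=> C H N.
set q := #|fst_state C|.
have [i [hi hl]] := lev_inf q N.
set p := size (Pre i).
set k := lev i in hl.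
set n := p + size (Wpart p k).
exists n; split.
  have := size_Pre i. rewrite -/p /n. lia.
rewrite prefix_W -/p -/k -/n.
set x := Pre i ++ Wpart p k.
set l := ell k. set T := Tk k. set R := RR p k. set e := eexp p k.
set L := size (Wd k).
have hL : L = l * 2 ^ l by rewrite /L size_Wd.
have hR := RR_big p k. rewrite -/R -/e in hR.
have he : p + l + 64 = e by [].
have hRp : 0 < R by apply: RR_pos.
have hLp : 0 < L by apply: Wd_pos.
have hn : n = p + R * R * L by rewrite /n size_Wpart.
have hC : 3 * (R * R * L) <= 4 * size (fst_out C x).
  have h1 := C_lb H (Pre i) (R * R) T (blk_uniq l).
  rewrite size_blk -Wpart_eq -/x in h1.
  have hq : q * (T.+1 * 2 ^ T) * q <= Bnd k T.
    rewrite /Bnd hl.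
    have h2 : 1 <= q.+1 * 2 ^ q by rewrite muln_gt0 expn_gt0.
    apply: leq_trans (_ : q.+1 * (T.+1 * 2 ^ T) * q.+1 * 1 <= _).
      rewrite muln1; apply: leq_mul => //; apply: leq_mul => //.
    by apply: leq_mul.
  have h3 : R * R * (T * (2 ^ l - Bnd k T)) <= size (fst_out C x).
    apply: leq_trans h1. rewrite leq_mul2l; apply/orP; right.
    rewrite leq_mul2l; apply/orP; right. exact: leq_sub2l.
  have h4 := num_main k. rewrite -/l -/T -hL in h4.
  have h5 : R * R * (3 * L) <= R * R * (4 * (T * (2 ^ l - Bnd k T))) by rewrite leq_mul2l h4 orbT.
  have : R * R * (4 * (T * (2 ^ l - Bnd k T))) <= 4 * size (fst_out C x).
    rewrite mulnCA leq_mul2l /=. done.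
  move: h5; rewrite mulnCA. lia.
set c := size (lz_parse x).
have hc : c <= p + 2 + 2 * (L * R).
  have := phrases_bound (Pre i) (R * R) R.-1 hLp.
  rewrite prednK // -Wpart_eq -/x -/c -/p.
  rewrite -[R * R * L]mulnA [R * L]mulnC leq_pmul2l //.
  lia.
set X := L * R in hc *.
have hX : R <= X by rewrite /X leq_pmull.
have hs : c.+1 < 2 ^ (2 + 2 * l + e).
  have hl2 : l < 2 ^ l by apply: ltn_expl.
  have : L < 2 ^ (2 * l).
    by rewrite hL mul2n -addnn expnD ltn_mul2r hl2 expn_gt0.
  move=> hL2.
  have : 4 * X < 2 ^ (2 + 2 * l + e).
    rewrite (expnD 2 (2 + 2 * l) e) (expnD 2 2 (2 * l)) (_ : 2 ^ 2 = 4) // -mulnA ltn_mul2l /=.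
    rewrite /X (_ : 2 ^ e = R) //.
    by rewrite ltn_mul2r hRp hL2.
  lia.
have hLZ := LZ_size hs. rewrite -/c in hLZ.
have hLZ2 : size (LZ x) <= 4 * X * (9 * e).
  apply: leq_trans hLZ _. apply: leq_mul; lia.
have hLZ3 : 8 * size (LZ x) <= R * X.
  have : 4 * X * (9 * e) * 8 <= R * X.
    rewrite mulnC.
    have -> : 8 * (4 * X * (9 * e)) = 288 * e * X by nia.
    by rewrite leq_mul2r hR orbT.
  lia.
have hY : R * X = R * R * L by rewrite /X; nia.
apply: real_gap.
rewrite hn. rewrite hY in hLZ3.
set Y := R * R * L in hC hLZ3 *.
have : R <= Y by rewrite /Y -mulnA leq_pmulr // muln_gt0 hRp.
lia.
Qed.
Lemma fs_part : FS_deep Sq.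
Proof.
exists (/ 4)%R; split; first lra.
move=> k.
exists (26 + (size (Wd k)).*2) => N.
have [i [hi hl]] := lev_inf k N.
set p := size (Pre i).
set n := p + size (Wpart p (lev i)).
exists n; split.
  have := size_Pre i. rewrite -/p /n. lia.
set x := Defs.prefix Sq n.
have hx : x = Pre i ++ Wpart p (lev i) by rewrite /x /n prefix_W.
subst k. set k := lev i.
have [a ha] := Dk_exists k x.
have [b hb] := Dk_exists (26 + (size (Wd k)).*2) x.
exists a, b; split => //; split => //.
set l := ell k. set T := Tk k. set R := RR p k. set e := eexp p k.
set L := size (Wd k).
set r := R * R.
have hL : L = l * 2 ^ l by rewrite /L size_Wd.
have hR := RR_big p k. rewrite -/R -/e in hR.
have he : p + l + 64 = e by [].
have hRp : 0 < R by apply: RR_pos.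
have hn : n = p + r * L by rewrite /n size_Wpart.
set y0 := wenc (Pre i) ++ nseq r false.
have w0 : Dwitness (26 + (size (Wd k)).*2) x y0.
  exists 2, 1, wns, (wns' (Wd k)); split; first exact: wvalid.
  split; first by rewrite wdesc.
  by rewrite wrun hx.
have hy0 : size y0 = 2 * p + r by rewrite /y0 size_cat size_wenc size_nseq; lia.
case: b hb => [db [_ hdb]|hb]; last by exfalso; apply: hb; exists y0.
have hdb0 := hdb _ w0. rewrite hy0 in hdb0.
case: a ha => [da [[y [wy ey]] _]|_] //.
have hlb := Dk_lb T wy (hx : x = Pre i ++ flatten (nseq r (flatten (blk (ell k))))) (blk_uniq _).
rewrite size_blk ey in hlb.
have h4 := num_main k. rewrite -/l -/T -hL in h4.
have h5 : 3 * (r * L) <= 4 * da.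
  apply: leq_trans (_ : r * (4 * (T * (2 ^ l - Bnd k T))) <= _).
    by rewrite mulnCA leq_mul2l h4 orbT.
  by rewrite mulnCA leq_mul2l /=.
apply: real_gap.
have hl13 : 13 <= l by have [g1 _] := ell_ge k; rewrite /l; lia.
have hL4 : 4 <= L.
  rewrite hL. have : 1 <= 2 ^ l by rewrite expn_gt0.
  move=> h; have := leq_mul hl13 h. lia.
have hrL : 4 * r <= r * L by rewrite mulnC leq_mul2l hL4 orbT.
have hRr : R <= r by rewrite /r leq_pmull.
have hrL2 : r <= r * L by rewrite leq_pmulr //; lia.
rewrite hn.
set Y := r * L in h5 hrL hrL2 *.
lia.
Qed.

Lemma notLZ_part : ~ LZ_deep Sq.
Proof.
move=> [al [hal H]].
have [K hK] := INR_unbounded (2 / al)%R.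
have hK1 : (2 < INR K.+1 * al)%R.
  rewrite S_INR.
  have : (2 / al * al = 2)%R by field; lra.
  nra.
have [N hN] := H (zfst K) (@zfst_IL K).
have [M hM] := INR_unbounded (2 * INR K.+2 / al)%R.
set i := maxn N M.
set x := Pre i.+1.
set n := size x.
have hn : N <= n.
  have := size_Pre i.+1. rewrite -/x -/n /i. lia.
have := hN n hn.
rewrite /n prefix_Z -/x -/n.
have hz := zfst_size K x.
set p' := size (Pre i) + size (Wpart (size (Pre i)) (lev i)).
have hxn : n = i.+1 * p'.
  rewrite /n /x Pre_S size_cat /phase size_cat size_nseq /p'. lia.
have hcnt : count id x <= p'.
  rewrite /x Pre_S /phase catA count_cat.
  have -> : count id (nseq (i * (size (Pre i) + size (Wpart (size (Pre i)) (lev i)))) false) = 0.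
    by elim: (_ * _) => //.
  rewrite addn0. apply: leq_trans (count_size _ _) _. by rewrite size_cat.
have hp' : 0 < p'.
  rewrite /p' size_Wpart. have := RR_pos (size (Pre i)) (lev i). have := Wd_pos (lev i).
  move=> h1 h2. have : 0 < RR (size (Pre i)) (lev i) * RR (size (Pre i)) (lev i) * size (Wd (lev i)).
    by rewrite !muln_gt0 h1 h2.
  lia.
have hz2 : K.+1 * size (fst_out (zfst K) x) <= n + K.+1 * K.+2 * p'.
  apply: leq_trans hz _. rewrite leq_add2l leq_mul2l hcnt orbT. done.
have hzR := le_INR _ _ (elimT leP hz2).
rewrite -!plusE -!multE plus_INR !mult_INR in hzR.
have hnR : INR n = (INR i.+1 * INR p')%R by rewrite hxn -multE mult_INR.
have hiM : (INR M <= INR i.+1)%R by apply: le_INR; apply/leP; rewrite /i; lia.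
have hiR : (2 * INR K.+2 < INR i.+1 * al)%R.
  have : (2 * INR K.+2 / al * al = 2 * INR K.+2)%R by field; lra.
  nra.
have hp'R : (0 < INR p')%R by apply: lt_0_INR; apply/ltP.
have hK1p : (0 < INR K.+1)%R by apply: lt_0_INR; apply/ltP.
have hK2p : (0 < INR K.+2)%R by apply: lt_0_INR; apply/ltP.
have hLZ : (0 <= INR (size (LZ x)))%R by apply: pos_INR.
set cC := INR (size (fst_out (zfst K) x)) in hzR *.
set lz := INR (size (LZ x)) in hLZ *.
rewrite hnR in hzR *.
set I1 := INR i.+1 in hiR hiM hnR hzR *.
set K1 := INR K.+1 in hK1 hzR hK1p *.
set K2 := INR K.+2 in hiR hzR hK2p *.
set pp := INR p' in hp'R hzR hnR *.
move=> hge.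
(* K1 * al * I1 * pp <= K1 * cC <= I1 pp + K1 K2 pp, but K1 al > 2 and al I1 > 2 K2 *)
have h1 : (K1 * (al * (I1 * pp)) <= K1 * cC)%R.
  apply: Rmult_le_compat_l; lra.
have h2 : (2 * (I1 * pp) < K1 * al * (I1 * pp))%R.
  apply: Rmult_lt_compat_r; [nra | lra].
have h3 : (2 * (K1 * K2 * pp) < K1 * (I1 * al) * pp)%R.
  have : (2 * K2 * (K1 * pp) < I1 * al * (K1 * pp))%R by apply: Rmult_lt_compat_r; nra.
  nra.
nra.
Qed.

Theorem mainTheorem9 :
  exists S : binseq, io_LZ_deep S /\ FS_deep S /\ ~ LZ_deep S.
Proof.
exists Sq; split; [exact: io_part | split; [exact: fs_part | exact: notLZ_part]].
Qed.
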